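(* Let $\mathcal{L}:\mathbb{R}^n\to\mathbb{R}$ be differentiable with $L$-Lipschitz gradient ($L>0$). Fix $\delta_0>0$, $\varepsilon\ge0$, $\eta_{\mathrm{FCM}}>0$. Let $\mathbf{x}_k\ne\mathbf{0}$ with $\mathbf{g}_k=\nabla\mathcal{L}(\mathbf{x}_k)\neq\mathbf{0}$, assume $\varepsilon\le L\|\mathbf{g}_k\|^2$ and that $\mathcal{L}$ is convex on the segment $[\mathbf{x}_k',\mathbf{x}_k]$, and let $\mathbf{x}_{k+1}$ be produced by one FCM step (as in the context). Then, with $c=\min\{\eta_{\mathrm{FCM}}/(2L),\,1/(8L)\}$, $$\mathcal{L}(\mathbf{x}_{k+1})\le\mathcal{L}(\mathbf{x}_k)-c\,\|\nabla\mathcal{L}(\mathbf{x}_k)\|^2.$$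
   Context: One FCM step from $\mathbf{x}_k$: $\mathbf{g}_k=\nabla\mathcal{L}(\mathbf{x}_k)$, $\delta_k=\delta_0\,\|\mathbf{x}_k\|/\|\mathbf{g}_k\|$, $\mathbf{x}_k'=\mathbf{x}_k-\delta_k\mathbf{g}_k$, $\mathbf{g}_k'=\nabla\mathcal{L}(\mathbf{x}_k')$, $\mathbf{h}_k=(\mathbf{g}_k-\mathbf{g}_k')/\delta_k$, $\alpha_k^{\mathrm{raw}}=\|\mathbf{g}_k\|^2/(\langle\mathbf{g}_k,\mathbf{h}_k\rangle+\varepsilon)$ (with $\alpha_k^{\mathrm{raw}}=+\infty$ if the denominator is $0$), $\alpha_k=\min\{\alpha_k^{\mathrm{raw}},1/L\}$. Single Armijo check: if $\mathcal{L}(\mathbf{x}_k-\alpha_k\mathbf{g}_k)>\mathcal{L}(\mathbf{x}_k)-\eta_{\mathrm{FCM}}\,\alpha_k\|\mathbf{g}_k\|^2$, replace $\alpha_k$ by $\alpha_k/2$ (once, with no further check). Then $\mathbf{x}_{k+1}=\mathbf{x}_k-\alpha_k\mathbf{g}_k$. *)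

(* Defs.v *)
From HB Require Import structures.
From mathcomp Require Import all_boot all_order all_algebra.
From mathcomp Require Import all_classical all_reals all_analysis.
Set Implicit Arguments. Unset Strict Implicit. Unset Printing Implicit Defensive.
Import Order.TTheory GRing.Theory Num.Theory.
Import numFieldNormedType.Exports.
Local Open Scope ring_scope.

Section FCM.
Variables (R : realType) (n : nat).
Implicit Types (u v x : 'rV[R]_n).

Definition dotp u v : R := \sum_(i < n) u 0 i * v 0 i.
Definition enorm v : R := Num.sqrt (dotp v v).

Definition is_gradient (f : 'rV[R]_n -> R) (grad : 'rV[R]_n -> 'rV[R]_n) :=
  forall x, differentiable f x /\ forall h, ('d f x : 'rV[R]_n -> R) h = dotp (grad x) h.

Definition lipschitz_grad (grad : 'rV[R]_n -> 'rV[R]_n) (L : R) :=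
  forall x y, enorm (grad x - grad y) <= L * enorm (x - y).

Definition convex_on_segment (f : 'rV[R]_n -> R) (a b : 'rV[R]_n) :=
  forall s1 s2 t : R, 0 <= s1 <= 1 -> 0 <= s2 <= 1 -> 0 <= t <= 1 ->
    let u := (1 - s1) *: a + s1 *: b in
    let v := (1 - s2) *: a + s2 *: b in
    f ((1 - t) *: u + t *: v) <= (1 - t) * f u + t * f v.

Variables (f : 'rV[R]_n -> R) (grad : 'rV[R]_n -> 'rV[R]_n) (L delta0 eps eta : R).

Definition fcm_delta x : R := delta0 * enorm x / enorm (grad x).
Definition fcm_xprime x : 'rV[R]_n := x - fcm_delta x *: grad x.
Definition fcm_h x : 'rV[R]_n :=
  (fcm_delta x)^-1 *: (grad x - grad (fcm_xprime x)).
(* alpha_k = min(alpha_raw, 1/L), with alpha_raw = +oo when the denominator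
   is 0 (so alpha_k = 1/L in that case). *)
Definition fcm_alpha0 x : R :=
  let den := dotp (grad x) (fcm_h x) + eps in
  if den == 0 then L^-1
  else Num.min (enorm (grad x) ^+ 2 / den) L^-1.
Definition fcm_alpha x : R :=
  let a := fcm_alpha0 x in
  if f (x - a *: grad x) > f x - eta * a * enorm (grad x) ^+ 2 then a / 2 else a.
Definition fcm_step x : 'rV[R]_n := x - fcm_alpha x *: grad x.

End FCM.

(* Main.v *)
Require Import Defs.
From HB Require Import structures.
From mathcomp Require Import all_boot all_order all_algebra.
From mathcomp Require Import all_classical all_reals all_analysis.
From mathcomp Require Import ring lra.
Import Order.TTheory GRing.Theory Num.Theory.
Import numFieldNormedType.Exports.
Local Open Scope ring_scope.
Section Alg.
Context {R : realType} {n : nat}.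
Implicit Types u v w : 'rV[R]_n.

Lemma dotpC u v : dotp u v = dotp v u.
Proof. by apply: eq_bigr => i _; rewrite mulrC. Qed.
Lemma dotpDl u v w : dotp (u + v) w = dotp u w + dotp v w.
Proof. by rewrite /dotp -big_split; apply: eq_bigr => i _; rewrite !mxE mulrDl. Qed.
Lemma dotpZl k u w : dotp (k *: u) w = k * dotp u w.
Proof. by rewrite /dotp mulr_sumr; apply: eq_bigr => i _; rewrite !mxE mulrA. Qed.
Lemma dotpNl u w : dotp (- u) w = - dotp u w.
Proof. by rewrite -scaleN1r dotpZl mulN1r. Qed.
Lemma dotpBl u v w : dotp (u - v) w = dotp u w - dotp v w.
Proof. by rewrite dotpDl dotpNl. Qed.
Lemma dotpDr u v w : dotp w (u + v) = dotp w u + dotp w v.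
Proof. by rewrite dotpC dotpDl !(dotpC w). Qed.
Lemma dotpZr k u w : dotp w (k *: u) = k * dotp w u.
Proof. by rewrite dotpC dotpZl dotpC. Qed.
Lemma dotpNr u w : dotp w (- u) = - dotp w u.
Proof. by rewrite dotpC dotpNl dotpC. Qed.
Lemma dotpBr u v w : dotp w (u - v) = dotp w u - dotp w v.
Proof. by rewrite dotpDr dotpNr. Qed.
Lemma dotp_ge0 u : 0 <= dotp u u.
Proof. by apply: sumr_ge0 => i _; rewrite -expr2 sqr_ge0. Qed.
Lemma enorm2 u : enorm u ^+ 2 = dotp u u.
Proof. by rewrite /enorm sqr_sqrtr // dotp_ge0. Qed.
Lemma dotp_gt0 u : u != 0 -> 0 < dotp u u.
Proof.
move=> un0; rewrite lt_def dotp_ge0 andbT; apply/negP => /eqP H.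
move/eqP: un0; apply; apply/rowP => j; rewrite mxE.
have : \sum_(i < n) u 0 i * u 0 i == 0 by rewrite -/(dotp u u) H.
rewrite psumr_eq0; last by move=> i _; rewrite -expr2 sqr_ge0.
by move/allP/(_ j (mem_index_enum _)); rewrite implyTb mulf_eq0 orbb => /eqP.
Qed.

Lemma amgm K u w : 0 < K -> dotp u u <= K ^+ 2 * dotp w w -> dotp u w <= K * dotp w w.
Proof.
move=> K0 H.
have := dotp_ge0 (K *: w - u).
rewrite !(dotpBl, dotpBr, dotpZl, dotpZr) (dotpC u w) => H2.
have : 2 * K * dotp w u <= 2 * K * (K * dotp w w) by nra.
by rewrite ler_pM2l ?mulr_gt0 // (dotpC w).
Qed.
End Alg.
Lemma line_quot {R : realType} {n : nat} (f : 'rV[R]_n -> R) (p w : 'rV[R]_n) (t : R) :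
  (fun h : R => h^-1 *: ((fun s => f (s *: w + p)) (h *: 1 + t) - (fun s => f (s *: w + p)) t))
  = (fun h : R => h^-1 *: (f (h *: w + (t *: w + p)) - f (t *: w + p))).
Proof.
apply: funext => h /=.
by rewrite [h *: 1]mulr1 scalerDl addrA.
Qed.

Lemma line_derive {R : realType} {n : nat} (f : 'rV[R]_n -> R) grad (p w : 'rV[R]_n) (t : R) :
  is_gradient f grad ->
  is_derive t 1 (fun s => f (s *: w + p)) (dotp (grad (t *: w + p)) w).
Proof.
move=> /(_ (t *: w + p)) [df dg].
have D : derivable f (t *: w + p) w by exact: diff_derivable.
apply: DeriveDef.
  by rewrite /derivable line_quot.
by rewrite /derive line_quot -/(derive f _ w) deriveE // dg.
Qed.

Lemma line_mvt {R : realType} {n : nat} (f : 'rV[R]_n -> R) grad (p w : 'rV[R]_n) (t : R) :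
  is_gradient f grad -> 0 < t ->
  exists2 c, 0 < c < t & f (t *: w + p) - f p = t * dotp (grad (c *: w + p)) w.
Proof.
move=> hg t0.
have := @MVT R (fun s => f (s *: w + p)) (fun c => dotp (grad (c *: w + p)) w) 0 t t0.
case.
- by move=> c _; exact: (line_derive f grad p w c hg).
- apply: derivable_within_continuous => c _.
  by have [] := line_derive f grad p w c hg.
move=> c; rewrite in_itv /= => ct; rewrite scale0r add0r subr0 => E.
by exists c => //; rewrite E mulrC.
Qed.

Lemma lip_sq {R : realType} {n : nat} (grad : 'rV[R]_n -> 'rV[R]_n) L x y :
  lipschitz_grad grad L ->
  dotp (grad x - grad y) (grad x - grad y) <= L ^+ 2 * dotp (x - y) (x - y).
Proof.
move=> /(_ x y) H.
rewrite -!enorm2 -exprMn; apply: lerXn2r => //; rewrite ?nnegrE //.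
  by rewrite /enorm sqrtr_ge0.
by apply: le_trans H; rewrite /enorm sqrtr_ge0.
Qed.

Lemma grad_bound {R : realType} {n : nat} (grad : 'rV[R]_n -> 'rV[R]_n) L (p w : 'rV[R]_n) c :
  lipschitz_grad grad L -> 0 < L -> 0 < c ->
  dotp (grad (c *: w + p) - grad p) w <= L * c * dotp w w /\
  dotp (grad p - grad (c *: w + p)) w <= L * c * dotp w w.
Proof.
move=> hl L0 c0.
have E : dotp ((c *: w + p) - p) ((c *: w + p) - p) = c ^+ 2 * dotp w w.
  by rewrite addrK dotpZl dotpZr mulrA expr2.
split; apply: amgm; rewrite ?mulr_gt0 //.
- by apply: le_trans (lip_sq _ _ _ _ hl) _; rewrite E exprMn mulrA.
- by apply: le_trans (lip_sq _ _ _ _ hl) _; rewrite -opprB dotpNl dotpNr opprK E exprMn mulrA.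
Qed.

Lemma dir_bound {R : realType} {n : nat} (f : 'rV[R]_n -> R) grad L (p w : 'rV[R]_n) D :
  is_gradient f grad -> lipschitz_grad grad L -> 0 < L ->
  (forall t, 0 < t <= 1 -> f (t *: w + p) - f p <= t * D) ->
  dotp (grad p) w <= D.
Proof.
move=> hg hl L0 H; apply/ler_addgt0Pr => e e0.
set N := dotp w w.
have N0 : 0 <= N by exact: dotp_ge0.
set K := L * N + 1.
have K0 : 0 < K by rewrite /K; have := mulr_ge0 (ltW L0) N0; lra.
set t := Num.min 1 (e / K).
have t0 : 0 < t by rewrite /t lt_min ltr01 divr_gt0.
have t1 : t <= 1 by rewrite /t ge_min lexx.
have tK : t * K <= e by rewrite -ler_pdivlMr // /t ge_min lexx orbT.
have [c /andP[c0 ct] E] := line_mvt f grad p w t hg t0.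
have := H t; rewrite t0 t1 => /(_ isT); rewrite E => H1.
have H2 : dotp (grad (c *: w + p)) w <= D by rewrite -(ler_pM2l t0).
have [_ H3] := grad_bound grad L p w c hl L0 c0.
rewrite dotpBl in H3.
have H4 : L * c * N <= L * t * N.
  by apply: ler_wpM2r => //; apply: ler_wpM2l; rewrite ?ltW.
have H5 : L * t * N <= e.
  apply: le_trans tK; rewrite /K mulrDr mulr1 mulrA (mulrC t L); lra.
rewrite -/N in H3; lra.
Qed.

Lemma mono_seg {R : realType} {n : nat} (f : 'rV[R]_n -> R) grad L (a b : 'rV[R]_n) :
  is_gradient f grad -> lipschitz_grad grad L -> 0 < L ->
  convex_on_segment f a b ->
  0 <= dotp (grad b - grad a) (b - a).
Proof.
move=> hg hl L0 hc.
have h1 : dotp (grad a) (b - a) <= f b - f a.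
  apply: (dir_bound f grad L) => // t /andP[t0 t1].
  have := hc 0 1 t; rewrite !lexx ler01 t1 ltW //= => /(_ isT isT isT).
  rewrite ?(subr0, subrr, scale1r, scale0r, addr0, add0r).
  have -> : (1 - t) *: a + t *: b = t *: (b - a) + a.
    by rewrite scalerBl scale1r scalerBr; apply/rowP => i; rewrite !mxE; ring.
  lra.
have h2 : dotp (grad b) (a - b) <= f a - f b.
  apply: (dir_bound f grad L) => // t /andP[t0 t1].
  have := hc 1 0 t; rewrite !lexx ler01 t1 ltW //= => /(_ isT isT isT).
  rewrite ?(subr0, subrr, scale1r, scale0r, addr0, add0r).
  have -> : (1 - t) *: b + t *: a = t *: (a - b) + b.
    by rewrite scalerBl scale1r scalerBr; apply/rowP => i; rewrite !mxE; ring.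
  lra.
rewrite dotpBl; rewrite -opprB dotpNr in h2; lra.
Qed.

Lemma descent {R : realType} {n : nat} (f : 'rV[R]_n -> R) grad L (x : 'rV[R]_n) s :
  is_gradient f grad -> lipschitz_grad grad L -> 0 < L -> 0 < s ->
  f (x - s *: grad x) <= f x - s * dotp (grad x) (grad x) + L * s ^+ 2 * dotp (grad x) (grad x).
Proof.
move=> hg hl L0 s0.
have -> : x - s *: grad x = s *: (- grad x) + x by rewrite scalerN addrC.
have [c /andP[c0 cs] E] := line_mvt f grad x (- grad x) s hg s0.
have [H _] := grad_bound grad L x (- grad x) c hl L0 c0.
rewrite dotpBl dotpNl !dotpNr opprK in H.
set G := dotp (grad x) (grad x) in H *.
have G0 : 0 <= G by exact: dotp_ge0.
rewrite dotpNr in E.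
have H2 : L * c * G <= L * s * G by apply: ler_wpM2r => //; apply: ler_wpM2l; rewrite ?ltW.
have H3 : - dotp (grad (c *: - grad x + x)) (grad x) <= - G + L * s * G by lra.
have : s * (- dotp (grad (c *: - grad x + x)) (grad x)) <= s * (- G + L * s * G).
  by rewrite ler_pM2l.
rewrite -E expr2; lra.
Qed.

Theorem mainTheorem3 (R : realType) (n : nat)
  (f : 'rV[R]_n -> R) (grad : 'rV[R]_n -> 'rV[R]_n)
  (L delta0 eps eta : R) (x : 'rV[R]_n) :
  is_gradient f grad ->
  0 < L -> lipschitz_grad grad L ->
  0 < delta0 -> 0 <= eps -> 0 < eta ->
  x != 0 -> grad x != 0 ->
  eps <= L * enorm (grad x) ^+ 2 ->
  convex_on_segment f (fcm_xprime grad delta0 x) x ->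
  f (fcm_step f grad L delta0 eps eta x)
    <= f x - Num.min (eta / (2 * L)) (8 * L)^-1 * enorm (grad x) ^+ 2.
Proof.
move=> hg L0 hl d0 e0 eta0 xn0 gn0 heps hc.
have mono := mono_seg f grad L _ _ hg hl L0 hc.
rewrite enorm2 in heps *.
set g := grad x in mono heps gn0 *.
set G := dotp g g in heps *.
have G0 : 0 < G by exact: dotp_gt0.
have ng0 : 0 < enorm g by rewrite /enorm sqrtr_gt0.
have nx0 : 0 < enorm x by rewrite /enorm sqrtr_gt0 dotp_gt0.
set d := fcm_delta grad delta0 x.
have dpos : 0 < d by rewrite /d /fcm_delta divr_gt0 ?mulr_gt0.
have Exx : x - fcm_xprime grad delta0 x = d *: g by rewrite /fcm_xprime opprB addrC subrK.
rewrite Exx dotpZr in mono.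
have lo : 0 <= dotp (g - grad (fcm_xprime grad delta0 x)) g.
  by rewrite -(pmulr_rge0 _ dpos).
have hi : dotp (g - grad (fcm_xprime grad delta0 x)) g <= (L * d) * G.
  apply: amgm; first by rewrite mulr_gt0.
  apply: le_trans (lip_sq _ _ _ _ hl) _.
  by rewrite Exx dotpZl dotpZr -/G exprMn !expr2 !mulrA.
have Egh : dotp g (fcm_h grad delta0 x) = d^-1 * dotp (g - grad (fcm_xprime grad delta0 x)) g.
  by rewrite /fcm_h -/d dotpZr dotpC.
have gh0 : 0 <= dotp g (fcm_h grad delta0 x) by rewrite Egh mulr_ge0 // invr_ge0 ltW.
have ghL : dotp g (fcm_h grad delta0 x) <= L * G.
  rewrite Egh; rewrite -(ler_pM2l dpos) mulrA mulrV ?unitfE ?gt_eqF // mul1r.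
  by apply: le_trans hi _; rewrite -mulrA mulrCA mulrA.
set a := fcm_alpha0 grad L delta0 eps x.
have [aL a2L] : a * L <= 1 /\ 1 <= a * (2 * L).
  rewrite /a /fcm_alpha0 -/g.
  set den := dotp g (fcm_h grad delta0 x) + eps.
  have den0 : 0 <= den by rewrite /den addr_ge0.
  have den2 : den <= 2 * L * G by rewrite /den; lra.
  case: ifP => [_|/negbT dn0].
    by rewrite mulVf ?gt_eqF // mulrCA mulVf ?gt_eqF // mulr1; split => //; lra.
  have dpos' : 0 < den by rewrite lt_def dn0 den0.
  split.
    rewrite -ler_pdivlMr // div1r; by rewrite ge_min lexx orbT.
  rewrite -ler_pdivrMr ?mulr_gt0 // div1r le_min; apply/andP; split.
    rewrite ler_pdivlMr //; apply: le_trans (ler_wpM2l _ den2) _.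
      by rewrite invr_ge0 mulr_ge0 // ltW.
    by rewrite enorm2 mulrA mulVf ?gt_eqF ?mulr_gt0 // mul1r.
  by rewrite lef_pV2 ?posrE ?mulr_gt0 //; lra.
set c := Num.min _ _.
have c1 : c * (2 * L) <= eta by rewrite -ler_pdivlMr ?mulr_gt0 // /c ge_min lexx.
have c2 : c * (8 * L) <= 1 by rewrite -ler_pdivlMr ?mulr_gt0 // div1r /c ge_min lexx orbT.
have c0 : 0 <= c by rewrite /c le_min !ltW ?divr_gt0 ?invr_gt0 ?mulr_gt0.
have apos : 0 < a.
  have : 0 < a * (2 * L) by lra.
  by rewrite pmulr_lgt0 ?mulr_gt0.
rewrite /fcm_step /fcm_alpha -/a -/g -/G.
case: ifP => [_|/negbT].
  have := descent f grad L x (a / 2) hg hl L0 (divr_gt0 apos (ltr0Sn _ 1)).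
  rewrite -/g -/G => H.
  apply: le_trans H _.
  have E1 : L * (a / 2) ^+ 2 * G = (a * L) * (a / 4 * G).
    by rewrite expr2; field.
  have E2 : a / 2 * G = 2 * (a / 4 * G) by field.
  rewrite E1 E2.
  have P1 : 0 <= (1 - a * L) * (a / 4 * G).
    by rewrite mulr_ge0 ?subr_ge0 // mulr_ge0 // ltW // divr_gt0.
  have P2 : 0 <= (a / 4 - c) * G.
    apply: mulr_ge0; last exact: ltW G0.
    rewrite -(pmulr_lge0 _ (mulr_gt0 (ltr0Sn _ 7) L0)).
    have -> : (a / 4 - c) * (8 * L) = 2 * (a * (2 * L)) / 2 - c * (8 * L) by field.
    have -> : 2 * (a * (2 * L)) / 2 = a * (2 * L) by field.
    lra.
  have : 0 <= a / 4 * G by rewrite mulr_ge0 // ltW // divr_gt0.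
  rewrite mulrBl mulrBl mul1r in P1 P2.
  lra.
rewrite -leNgt enorm2 -/g -/G => H; apply: le_trans H _.
have P : 0 <= (eta * a - c) * G.
  apply: mulr_ge0; last exact: ltW G0.
  rewrite -(pmulr_lge0 _ (mulr_gt0 (ltr0Sn _ 1) L0)).
  have -> : (eta * a - c) * (2 * L) = eta * (a * (2 * L)) - c * (2 * L) by ring.
  have : eta * 1 <= eta * (a * (2 * L)) by rewrite ler_pM2l.
  lra.
rewrite mulrBl in P; lra.
Qed.
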